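(* Let $\mathcal{W}=\mathcal{W}^{(1)}+\cdots+\mathcal{W}^{(K)}$ be a decomposition of a tensor $\mathcal{W}\in\mathbb{R}^{n_1\times\cdots\times n_K}$, and let $\bar r_k=\mathrm{rank}(\boldsymbol{W}^{(k)}_{(k)})$. This decomposition is locally identifiable if and only if there exists $k^\ast$ such that $\mathcal{W}^{(k^\ast)}=\mathcal{W}$ and $\mathcal{W}^{(k)}=0$ for all $k\ne k^\ast$.
   Context: $N=\prod_k n_k$; for a tensor $\mathcal{W}^{(k)}$, $\boldsymbol{W}^{(k)}_{(k)}\in\mathbb{R}^{n_k\times N/n_k}$ is its mode-$k$ unfolding (columns are its mode-$k$ fibers). A decomposition $\mathcal{W}=\sum_{k=1}^K\mathcal{W}^{(k)}$ with $\bar r_k=\mathrm{rank}(\boldsymbol{W}^{(k)}_{(k)})$ is called locally identifiable if there is no other decomposition $\mathcal{W}=\sum_{k=1}^K\tilde{\mathcal{W}}^{(k)}$ (with $(\tilde{\mathcal{W}}^{(k)})_k\ne(\mathcal{W}^{(k)})_k$) having the same ranks, i.e. $\mathrm{rank}(\tilde{\boldsymbol{W}}^{(k)}_{(k)})=\bar r_k$ for all $k$. *)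

(* Defs.v *)
From HB Require Import structures.
From mathcomp Require Import all_boot all_order all_algebra.
Set Implicit Arguments. Unset Strict Implicit. Unset Printing Implicit Defensive.
Import Order.TTheory GRing.Theory Num.Theory.
Local Open Scope ring_scope.

(* Multi-indices of a tensor in R^{n_0 x ... x n_{K-1}} (modes indexed by 'I_K). *)
Definition midx (K : nat) (n : 'I_K -> nat) : finType :=
  {dffun forall j : 'I_K, 'I_(n j)}.

Definition tensor (R : realFieldType) (K : nat) (n : 'I_K -> nat) :=
  {ffun midx n -> R}.

(* Indices of all modes other than k: these index the mode-k fibers
   (the columns of the mode-k unfolding); there are N / n_k of them. *)
Definition cidx (K : nat) (n : 'I_K -> nat) (k : 'I_K) : finType :=
  {dffun forall j : {j : 'I_K | j != k}, 'I_(n (val j))}.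

Definition join (K : nat) (n : 'I_K -> nat) (k : 'I_K) (i : 'I_(n k))
    (c : cidx n k) : midx n :=
  [ffun j : 'I_K =>
     (if j != k as b return (j != k) = b -> 'I_(n j)
      then fun h => c (exist _ j h)
      else fun h => cast_ord (congr1 n (esym (eqP (negbFE h)))) i) (erefl _)].

(* Mode-k unfolding W_(k) : n_k x (N/n_k) matrix whose columns are the
   mode-k fibers of W (listed in the enumeration order of cidx n k). *)
Definition unfold (R : realFieldType) (K : nat) (n : 'I_K -> nat) (k : 'I_K)
    (W : tensor R n) : 'M[R]_(n k, #|cidx n k|) :=
  \matrix_(i < n k, c < #|cidx n k|) W (join i (enum_val c)).

Definition locally_identifiable (R : realFieldType) (K : nat) (n : 'I_K -> nat)
    (Ws : 'I_K -> tensor R n) : Prop :=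
  forall Ws' : 'I_K -> tensor R n,
    \sum_(k < K) Ws' k = \sum_(k < K) Ws k ->
    (forall k : 'I_K, \rank (unfold k (Ws' k)) = \rank (unfold k (Ws k))) ->
    forall k : 'I_K, Ws' k = Ws k.

(* Main.v *)
Require Import Defs.
From HB Require Import structures.
From mathcomp Require Import all_boot all_order all_algebra.
Import Order.TTheory GRing.Theory Num.Theory.
Local Open Scope ring_scope.
Set Implicit Arguments. Unset Strict Implicit. Unset Printing Implicit Defensive.
Section J.
Variables (K : nat) (n : 'I_K -> nat) (k : 'I_K).
Lemma join_ne (i : 'I_(n k)) (c : cidx n k) j (h : j != k) :
  join i c j = c (exist _ j h).
Proof.
rewrite /join ffunE.
move: (erefl (j != k)).
generalize (j != k) at 2 3.
case=> e. by rewrite (eq_irrelevance e h).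
by exfalso; move: h; rewrite e.
Qed.
Lemma join_eq (i : 'I_(n k)) (c : cidx n k) j (h : (j != k) = false) :
  join i c j = cast_ord (congr1 n (esym (eqP (negbFE h)))) i.
Proof.
rewrite /join ffunE.
move: (erefl (j != k)).
generalize (j != k) at 2 3.
case=> e. by exfalso; move: h; rewrite e.
by rewrite (eq_irrelevance e h).
Qed.
Lemma join_k (i : 'I_(n k)) (c c' : cidx n k) :
  join i c k = join i c' k.
Proof. by rewrite !(@join_eq _ _ k (negbF (eqxx k))). Qed.
Lemma join_val (i : 'I_(n k)) (c : cidx n k) :
  val (join i c k) = val i.
Proof. by rewrite !(@join_eq _ _ k (negbF (eqxx k))). Qed.
Lemma join_surj (m : midx n) : m = join (m k) [ffun j => m (val j)].
Proof.
apply/ffunP => j. case: (boolP (j != k)) => h.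
  by rewrite join_ne ffunE.
move: h; rewrite negbK => /eqP ->.
by apply/val_inj; rewrite join_val.
Qed.
End J.
Section R.
Variables (R : realFieldType) (K : nat) (n : 'I_K -> nat) (k : 'I_K).
Lemma sum_delta m (F : 'I_m -> R) a : \sum_(c < m) F c * (c == a)%:R = F a.
Proof.
rewrite (bigD1 a) //= eqxx mulr1 big1 ?addr0 // => c /negbTE ->; by rewrite mulr0.
Qed.
Lemma rank_le (T T' : tensor R n) (g : 'I_(n k) -> cidx n k -> R)
  (phi : cidx n k -> cidx n k) :
  (forall i i' c, g i c = g i' c) ->
  (forall i c, T' (join i c) = T (join i c) + g i c * T (join i (phi c))) ->
  (\rank (unfold k T') <= \rank (unfold k T))%N.
Proof.
move=> gi hT.
case: (posnP (n k)) => [n0|npos].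
  by apply: leq_trans (rank_leq_row _) _; rewrite [X in (X <= _)%N]n0.
pose i0 : 'I_(n k) := Ordinal npos.
pose M : 'M[R]_(#|cidx n k|) := \matrix_(c', c)
  ((c' == c)%:R + g i0 (enum_val c) * (c' == enum_rank (phi (enum_val c)))%:R).
suff -> : unfold k T' = unfold k T *m M by apply: mxrankM_maxl.
apply/matrixP => i c; rewrite !mxE.
under eq_bigr => c' _ do rewrite !mxE mulrDr.
rewrite big_split /= sum_delta.
under eq_bigr => c' _ do rewrite mulrCA.
rewrite -mulr_sumr sum_delta enum_rankK hT (gi i i0).
by [].
Qed.
End R.
Section R2.
Variables (R : realFieldType) (K : nat) (n : 'I_K -> nat) (k : 'I_K).
Lemma rank_eq (T T' : tensor R n) (g : 'I_(n k) -> cidx n k -> R)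
  (phi : cidx n k -> cidx n k) :
  (forall i i' c, g i c = g i' c) ->
  (forall c, phi (phi c) = phi c) ->
  (forall i c, 1 + g i (phi c) != 0) ->
  (forall i c, T' (join i c) = T (join i c) + g i c * T (join i (phi c))) ->
  \rank (unfold k T') = \rank (unfold k T).
Proof.
move=> gi phiK nz hT; apply/eqP; rewrite eqn_leq (rank_le gi hT) /=.
apply: (@rank_le _ _ _ _ _ _ (fun i c => - g i c / (1 + g i (phi c))) phi).
  by move=> i i' c; rewrite (gi i i') (gi i i' (phi c)).
move=> i c; rewrite (hT i (phi c)) phiK.
have e : T (join i (phi c)) + g i (phi c) * T (join i (phi c)) = (1 + g i (phi c)) * T (join i (phi c)).
  by rewrite mulrDl mul1r.
rewrite e mulrA divfK // hT; rewrite mulNr; by rewrite addrK.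
Qed.
End R2.
Lemma small_nz (R : realFieldType) (x t : R) (e : bool) : 0 <= t ->
  1 + (-1) ^+ e * ((1 + `|x| + t)^-1 * x) != 0.
Proof.
move=> t0; set z := 1 + `|x| + t.
have zp : 0 < z by rewrite /z -addrA ltr_pwDl // addr_ge0.
have lt1 : `|(-1) ^+ e * (z^-1 * x)| < 1.
  rewrite normrM normrX normrN normr1 expr1n mul1r normrM normfV (gtr0_norm zp).
  rewrite ltr_pdivrMl // mulr1 /z -addrA addrCA ltr_pwDr //.
  by rewrite ltr_pwDl.
apply: contraTneq lt1; rewrite addrC => /eqP; rewrite addr_eq0 => /eqP ->.
by rewrite normrN normr1 ltxx.
Qed.
Section Main.
Variables (R : realFieldType) (K : nat) (n : 'I_K -> nat).
Lemma tensor_nz (A : tensor R n) : A != 0 -> exists a, A a != 0.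
Proof.
move=> hA; apply/existsP; apply: contraR hA => /existsPn H.
by apply/eqP/ffunP => m; rewrite ffunE; move: (H m); rewrite negbK => /eqP.
Qed.

Lemma two_nz (Ws : 'I_K -> tensor R n) (k1 k2 : 'I_K) :
  locally_identifiable Ws -> k1 != k2 -> Ws k1 != 0 -> Ws k2 != 0 -> False.
Proof.
move=> LI h12 hA hB.
have h21 : k2 != k1 by rewrite eq_sym.
set A := Ws k1; set B := Ws k2.
have [a Ha] := tensor_nz hA; have [b Hb] := tensor_nz hB.
pose upd (x y : midx n) : midx n := [ffun j => if j == k2 then y j else x j].
have updE : forall x y j, upd x y j = if j == k2 then y j else x j.
  by move=> x y j; rewrite ffunE.
pose m0 := upd b a.
pose s := (1 + `|A m0| + `|B m0|)^-1.
pose D : tensor R n := [ffun m => s * B (upd m0 m) * A (upd m m0)].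
have DE : forall m, D m = s * B (upd m0 m) * A (upd m m0) by move=> m; rewrite ffunE.
pose c (k : 'I_K) : R := (k == k1)%:R - (k == k2)%:R.
pose Ws' k : tensor R n := [ffun m => Ws k m + c k * D m].
have Ws'E : forall k m, Ws' k m = Ws k m + c k * D m by move=> k m; rewrite ffunE.
have sum1 : forall a : 'I_K, \sum_(k < K) ((k == a)%:R : R) = 1.
  by move=> a'; rewrite (bigD1 a') //= eqxx big1 ?addr0 // => k /negbTE ->.
have Hs : \sum_(k < K) Ws' k = \sum_(k < K) Ws k.
  apply/ffunP => m; rewrite !sum_ffunE.
  under eq_bigr do rewrite Ws'E.
  by rewrite big_split /= -mulr_suml sumrB !sum1 subrr mul0r addr0.
have zp : 0 < 1 + `|A m0| + `|B m0| by rewrite -addrA ltr_pwDl // addr_ge0.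
have s0 : s != 0 by rewrite invr_eq0 gt_eqF.
have Hr : forall k, \rank (unfold k (Ws' k)) = \rank (unfold k (Ws k)).
  move=> k; case: (eqVneq k k1) => [->|hk1].
    pose phi (cc : cidx n k1) : cidx n k1 :=
      [ffun j => if val j == k2 then m0 (val j) else cc j].
    have phiE : forall cc j, phi cc j = if val j == k2 then m0 (val j) else cc j.
      by move=> cc j; rewrite ffunE.
    apply: (@rank_eq R K n k1 A (Ws' k1) (fun i cc => s * B (upd m0 (join i cc))) phi).
    - move=> i i' cc; congr (_ * B _); apply/ffunP => j; rewrite !updE.
      by case: eqP => // ->; rewrite !(join_ne _ _ h21).
    - by move=> cc; apply/ffunP => j; rewrite !phiE; case: (_ == k2).
    - move=> i cc.
      have -> : upd m0 (join i (phi cc)) = m0.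
        apply/ffunP => j; rewrite !updE; case: eqP => [->|//].
        by rewrite (join_ne _ _ h21) phiE /= eqxx updE eqxx.
      have := small_nz (B m0) false (normr_ge0 (A m0)).
      by rewrite expr0 mul1r /s addrAC.
    - move=> i cc; rewrite Ws'E /c eqxx (negbTE h12) subr0 mul1r DE.
      congr (_ + _ * A _); apply/ffunP => j; rewrite !updE.
      case: eqP => [->|/eqP hj2]; first by rewrite (join_ne _ _ h21) phiE /= eqxx ?updE ?eqxx.
      case: (eqVneq j k1) => [->|hj1]; first by apply: join_k.
      by rewrite !(join_ne _ _ hj1) phiE /= (negbTE hj2).
  case: (eqVneq k k2) => [->|hk2]; last first.
    by congr (\rank (unfold _ _)); apply/ffunP => m; rewrite Ws'E /c (negbTE hk1) (negbTE hk2) subrr mul0r addr0.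
  pose c0 : cidx n k2 := [ffun j => m0 (val j)].
  have c0E : forall j, c0 j = m0 (val j) by move=> j; rewrite ffunE.
  apply: (@rank_eq R K n k2 B (Ws' k2) (fun i cc => - s * A (upd (join i cc) m0)) (fun _ => c0)).
  - move=> i i' cc; congr (_ * A _); apply/ffunP => j; rewrite !updE.
    by case: eqP => // /eqP hj; rewrite !(join_ne _ _ hj).
  - by [].
  - move=> i cc.
    have -> : upd (join i c0) m0 = m0.
      apply/ffunP => j; rewrite !updE; case: (eqVneq j k2) => [->|hj]; first by rewrite ?eqxx.
      by rewrite (join_ne _ _ hj) c0E /= updE (negbTE hj).
    have := small_nz (A m0) true (normr_ge0 (B m0)).
    by rewrite expr1 mulN1r mulNr.
  - move=> i cc; rewrite Ws'E /c eqxx (negbTE h21) sub0r mulN1r DE.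
    rewrite (_ : upd m0 (join i cc) = join i c0); last first.
    apply/ffunP => j; rewrite !updE; case: (eqVneq j k2) => [->|hj].
      by apply: join_k.
    by rewrite (join_ne _ _ hj) c0E /= ?updE ?(negbTE hj).
    by rewrite !mulNr [s * A _ * _]mulrAC.
have := LI Ws' Hs Hr k1 => /ffunP /(_ (upd a b)).
rewrite Ws'E /c eqxx (negbTE h12) subr0 mul1r -{2}(addr0 (Ws k1 _)) => /addrI.
rewrite DE.
have -> : upd m0 (upd a b) = b by apply/ffunP => j; rewrite !updE; case: (j == k2).
have -> : upd (upd a b) m0 = a by apply/ffunP => j; rewrite !updE; case: (j == k2).
by move/eqP; rewrite !mulf_eq0 (negbTE s0) (negbTE Ha) (negbTE Hb).
Qed.
End Main.
Lemma unfold0 (R : realFieldType) (K : nat) (n : 'I_K -> nat) (k : 'I_K) :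
  unfold k (0 : tensor R n) = 0.
Proof. by apply/matrixP => i j; rewrite !mxE ffunE. Qed.

Lemma rank0_tensor (R : realFieldType) (K : nat) (n : 'I_K -> nat) (k : 'I_K) (T : tensor R n) :
  \rank (unfold k T) = 0%N -> T = 0.
Proof.
move/eqP; rewrite mxrank_eq0 => /eqP H.
apply/ffunP => m; rewrite (join_surj k m) [RHS]ffunE.
move/matrixP: H => H.
have := H (m k) (enum_rank ([ffun j => m (val j)] : cidx n k)).
by rewrite !mxE enum_rankK.
Qed.

Theorem theorem4 (R : realFieldType) (K : nat) (n : 'I_K -> nat)
    (W : tensor R n) (Ws : 'I_K -> tensor R n) :
  (0 < K)%N ->
  \sum_(k < K) Ws k = W ->
  locally_identifiable Ws <->
  (exists ks : 'I_K, Ws ks = W /\ forall k : 'I_K, k != ks -> Ws k = 0).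
Proof.
move=> HK hW; split.
  move=> LI.
  have H : forall k1 k2, Ws k1 != 0 -> Ws k2 != 0 -> k1 = k2.
    move=> k1 k2 h1 h2; case: (eqVneq k1 k2) => // h.
    by case: (two_nz LI h h1 h2).
  have Z : forall ks k, Ws ks != 0 -> k != ks -> Ws k = 0.
    move=> ks k hks hk; case: (eqVneq (Ws k) 0) => // hk'.
    by rewrite (H _ _ hk' hks) eqxx in hk.
  case: (pickP (fun k => Ws k != 0)) => [ks hks | none].
    exists ks; split; last by move=> k; apply: Z.
    by rewrite -hW (bigD1 ks) //= big1 ?addr0 // => k; apply: Z.
  have Z0 : forall k, Ws k = 0 by move=> k; move/negbFE/eqP: (none k).
  exists (Ordinal HK); split; last by [].
  by rewrite Z0 -hW big1.
move=> [ks [hks h0]] Ws' hsum hrank.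
have z : forall k, k != ks -> Ws' k = 0.
  by move=> k hk; apply: (@rank0_tensor _ _ _ k); rewrite hrank h0 // unfold0 mxrank0.
have e : Ws' ks = W.
  by rewrite -hW -hsum (bigD1 ks) //= big1 ?addr0 // => k; apply: z.
move=> k; case: (eqVneq k ks) => [->|hk]; first by rewrite e hks.
by rewrite z // h0.
Qed.
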